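(* Let $C=L_1;\ldots;L_d$ be a sorting network on $n$ channels of depth $d$ that contains no redundant comparators. Then for every $k$ with $1\le k<d$ and every comparator $(i,j)\in L_k$, the comparator $(i,j)$ connects adjacent $k$-blocks of $C$; that is, every channel $m$ with $i<m<j$ belongs either to the $k$-block containing $i$ or to the $k$-block containing $j$.
   Context: Channels are numbered $1,\ldots,n$. A comparator network on $n$ channels of depth $d$ is a sequence $C=L_1;\ldots;L_d$ of layers; each layer is a set of comparators $(i,j)$ with $1\le i<j\le n$, and each channel occurs in at most one comparator of a given layer. An input $\bar x\in\{0,1\}^n$ propagates through $C$ as follows: $\bar x_0=\bar x$, and for $0<k\le d$, $\bar x_k$ is obtained from $\bar x_{k-1}$ by, for each comparator $(i,j)\in L_k$, putting the minimum of the values at positions $i,j$ of $\bar x_{k-1}$ at position $i$ and the maximum at position $j$ (other positions unchanged). The output is $C(\bar x)=\bar x_d$. $C$ is a sorting network if $C(\bar x)$ is sorted in non-decreasing order for every $\bar x\in\{0,1\}^n$. A comparator $(i,j)$ in layer $L_\ell$ is redundant if for every input $\bar x\in\{0,1\}^n$ the entries of $\bar x_{\ell-1}$ at positions $i$ and $j$ satisfy $(\bar x_{\ell-1})_i\le(\bar x_{\ell-1})_j$. For $0\le k<d$, the $k$-blocks of $C$ are the vertex sets of the connected components of the graph on the channels $\{1,\ldots,n\}$ having an edge $\{i,j\}$ for every comparator $(i,j)$ occurring in some layer $L_{k'}$ with $k'>k$; thus the $k$-blocks partition the set of channels. *)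

(* Defs.v *)
From mathcomp Require Import all_boot.
Set Implicit Arguments. Unset Strict Implicit. Unset Printing Implicit Defensive.

(* Channels 1..n are represented by 'I_n (channel c+1 <-> ordinal c); the
   order on channels is preserved. *)
Definition comparator (n : nat) := ('I_n * 'I_n)%type.
Definition layer (n : nat) := seq (comparator n).
Definition network (n : nat) := seq (layer n).
Definition input (n : nat) := {ffun 'I_n -> bool}.

Definition wf_comp n (c : comparator n) : bool := (c.1 < c.2)%N.

Definition wf_layer n (L : layer n) : bool :=
  all (@wf_comp n) L && uniq (flatten [seq [:: c.1; c.2] | c <- L]).

Definition wf_network n (C : network n) : bool := all (@wf_layer n) C.

Definition apply_layer n (L : layer n) (x : input n) : input n :=
  [ffun p => if has (fun c : comparator n => c.1 == p) L
             then [exists c in L, (c.1 == p) && (x c.1 && x c.2)]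
             else if has (fun c : comparator n => c.2 == p) L
             then [exists c in L, (c.2 == p) && (x c.1 || x c.2)]
             else x p].

Definition state n (C : network n) (k : nat) (x : input n) : input n :=
  foldl (fun y L => apply_layer L y) x (take k C).

Definition output n (C : network n) (x : input n) : input n :=
  state C (size C) x.

Definition sorted_input n (y : input n) : bool :=
  [forall i : 'I_n, forall j : 'I_n, (i <= j)%N ==> (y i <= y j)].

Definition sorting_network n (C : network n) : Prop :=
  forall x : input n, sorted_input (output C x).

(* comparator c in layer L_l (1-indexed l) is redundant *)
Definition redundant n (C : network n) (l : nat) (c : comparator n) : Prop :=
  forall x : input n, (state C l.-1 x c.1 <= state C l.-1 x c.2).

Definition no_redundant n (C : network n) : Prop :=
  forall l c, (1 <= l <= size C)%N -> c \in nth [::] C l.-1 -> ~ redundant C l c.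

(* edge relation: a comparator joining a and b in some layer L_k' with k' > k *)
Definition later_edge n (C : network n) (k : nat) : rel 'I_n :=
  fun a b => [exists k' : 'I_(size C), (k < k'.+1)%N &&
     [exists c in nth [::] C k', ((c.1 == a) && (c.2 == b)) || ((c.1 == b) && (c.2 == a))]].

Definition same_block n (C : network n) (k : nat) (a b : 'I_n) : bool :=
  connect (later_edge C k) a b.

(* Main.v *)
Require Import Defs.
From mathcomp Require Import all_boot.
From mathcomp Require Import zify.
Set Implicit Arguments. Unset Strict Implicit. Unset Printing Implicit Defensive.

Section Aux.
Variable n : nat.
Implicit Types (L : layer n) (x y : input n) (c : comparator n).

Definition one_more x x' (q : 'I_n) := x q = false /\ forall r, x' r = (r == q) || x r.

Definition fl (Ls : seq (layer n)) x := foldl (fun y L => apply_layer L y) x Ls.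

Lemma uniq_comp_aux (L : layer n) c c' a :
  uniq (flatten [seq [:: c0.1; c0.2] | c0 <- L]) -> c \in L -> c' \in L ->
  a \in [:: c.1; c.2] -> a \in [:: c'.1; c'.2] -> c = c'.
Proof.
elim: L => [|d L IH] //.
move=> hu0.
have : uniq ([:: d.1; d.2] ++ flatten [seq [:: c0.1; c0.2] | c0 <- L]) by [].
rewrite cat_uniq => /and3P[_ hd hu].
have inf : forall e b, e \in L -> b \in [:: e.1; e.2] ->
    b \in flatten [seq [:: c0.1; c0.2] | c0 <- L].
  by move=> e b eL bE; apply/flatten_mapP; exists e.
rewrite !in_cons => /orP[/eqP-> | cL] /orP[/eqP-> | c'L] ha ha' //.
- by case/negP: hd; apply/hasP; exists a; [exact: inf ha'|].
- by case/negP: hd; apply/hasP; exists a; [exact: inf ha|].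
- exact: IH.
Qed.

Lemma wf_uniq L c c' a : wf_layer L -> c \in L -> c' \in L ->
  a \in [:: c.1; c.2] -> a \in [:: c'.1; c'.2] -> c = c'.
Proof. by case/andP => _; exact: uniq_comp_aux. Qed.

Lemma wf_lt L c : wf_layer L -> c \in L -> (c.1 < c.2)%N.
Proof. by case/andP => /allP h _ /h. Qed.

Lemma apply_c1 L x c : wf_layer L -> c \in L -> apply_layer L x c.1 = x c.1 && x c.2.
Proof.
move=> wf cL; rewrite ffunE.
have -> : has (fun c0 : comparator n => c0.1 == c.1) L by apply/hasP; exists c.
apply/existsP/idP => [[c0 /andP[c0L /andP[/eqP e h]]] | h].
  have ec : c0 = c.
    by apply: (wf_uniq (a := c.1)) wf c0L cL _ _; rewrite !inE ?e eqxx.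
  by rewrite -ec.
by exists c; rewrite cL eqxx h.
Qed.

Lemma apply_c2 L x c : wf_layer L -> c \in L -> apply_layer L x c.2 = x c.1 || x c.2.
Proof.
move=> wf cL; rewrite ffunE.
have -> : has (fun c0 : comparator n => c0.1 == c.2) L = false.
  apply/negbTE/hasPn => c0 c0L; apply/negP => /eqP e.
  have ec : c0 = c.
    by apply: (wf_uniq (a := c.2)) wf c0L cL _ _; rewrite !inE ?e eqxx ?orbT.
  by have := wf_lt wf c0L; rewrite e ec ltnn.
have -> : has (fun c0 : comparator n => c0.2 == c.2) L by apply/hasP; exists c.
apply/existsP/idP => [[c0 /andP[c0L /andP[/eqP e h]]] | h].
  have ec : c0 = c.
    by apply: (wf_uniq (a := c.2)) wf c0L cL _ _; rewrite !inE ?e eqxx ?orbT.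
  by rewrite -ec.
by exists c; rewrite cL eqxx h.
Qed.

Lemma apply_free L x p : (forall c, c \in L -> (c.1 != p) && (c.2 != p)) ->
  apply_layer L x p = x p.
Proof.
move=> h; rewrite ffunE.
have -> : has (fun c0 : comparator n => c0.1 == p) L = false.
  by apply/negbTE/hasPn => c0 /h /andP[].
have -> // : has (fun c0 : comparator n => c0.2 == p) L = false.
by apply/negbTE/hasPn => c0 /h /andP[].
Qed.

Lemma pos_cases L p : (exists2 c, c \in L & c.1 = p) \/ (exists2 c, c \in L & c.2 = p)
   \/ (forall c, c \in L -> (c.1 != p) && (c.2 != p)).
Proof.
case h1: (has (fun c : comparator n => c.1 == p) L).
  by left; case/hasP: h1 => c cL /eqP; exists c.
case h2: (has (fun c : comparator n => c.2 == p) L).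
  by right; left; case/hasP: h2 => c cL /eqP; exists c.
right; right => c cL.
move/negbT/hasPn: h1 => h1; move/negbT/hasPn: h2 => h2.
by rewrite (h1 c cL) (h2 c cL).
Qed.

Lemma apply_agree L x x' r :
  (forall c, c \in L -> (c.1 == r) || (c.2 == r) -> (x c.1 = x' c.1) /\ (x c.2 = x' c.2)) ->
  x r = x' r -> apply_layer L x r = apply_layer L x' r.
Proof.
move=> h hr; rewrite !ffunE; case: ifP => h1.
  apply: eq_existsb => c0; case c0L: (c0 \in L) => //=; case e: (c0.1 == r) => //=.
  by case: (h c0 c0L); [rewrite e|move=> -> ->].
case: ifP => h2 //.
apply: eq_existsb => c0; case c0L: (c0 \in L) => //=; case e: (c0.2 == r) => //=.
by case: (h c0 c0L); [rewrite e orbT|move=> -> ->].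
Qed.

Lemma apply_mono L x x' : (forall r, x r -> x' r) ->
  forall r, apply_layer L x r -> apply_layer L x' r.
Proof.
move=> H r; rewrite !ffunE; case: ifP => _.
  case/existsP => c0 /andP[c0L /andP[e /andP[h1 h2]]].
  by apply/existsP; exists c0; rewrite c0L e /= (H _ h1) (H _ h2).
case: ifP => _; last exact: H.
case/existsP => c0 /andP[c0L /andP[e /orP[h|h]]];
  by apply/existsP; exists c0; rewrite c0L e /= (H _ h) ?orbT.
Qed.


Lemma apply_unrel L x x' p c r : wf_layer L -> c \in L -> p \in [:: c.1; c.2] ->
  r \notin [:: c.1; c.2] -> (forall t, t != p -> x t = x' t) ->
  apply_layer L x r = apply_layer L x' r.
Proof.
move=> wf cL hp hr hx; apply: apply_agree; last first.
  by apply: hx; apply/eqP => rp; move: hr; rewrite rp hp.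
move=> c0 c0L e.
have np : forall t, t \in [:: c0.1; c0.2] -> t != p.
  move=> t ht; apply/eqP => tp; rewrite tp in ht.
  have ec : c0 = c := wf_uniq wf c0L cL ht hp.
  by move: hr e; rewrite -ec !inE (eq_sym r c0.1) (eq_sym r c0.2) => /negbTE ->.
by split; apply: hx; apply: np; rewrite !inE eqxx ?orbT.
Qed.

Lemma layer_step L x x' p : wf_layer L -> one_more x x' p ->
  exists q, one_more (apply_layer L x) (apply_layer L x') q /\
    (q = p \/ exists2 c, c \in L & ((c.1 == p) && (c.2 == q)) || ((c.1 == q) && (c.2 == p))).
Proof.
move=> wf [xp hx'].
have hne : forall t, t != p -> x t = x' t by move=> t /negbTE tp; rewrite hx' tp.
have x'p : x' p = true by rewrite hx' eqxx.
case: (pos_cases L p) => [[c cL e]|[[c cL e]|hf]].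
- have ne : c.2 != c.1 by apply/eqP => h; move: (wf_lt wf cL); rewrite h ltnn.
  have e2 : x' c.2 = x c.2 by rewrite hx' -e (negbTE ne).
  have x'1 : x' c.1 = true by rewrite e.
  have x1 : x c.1 = false by rewrite e.
  exists (if x c.2 then c.1 else c.2); split; last first.
    case: ifP => _; first by left.
    by right; exists c => //; rewrite e !eqxx.
  split.
    by case: ifP => h2; [rewrite apply_c1 // x1 | rewrite apply_c2 // x1 h2].
  move=> r; case: (boolP (r \in [:: c.1; c.2])) => hr.
    rewrite !inE in hr; case/orP: hr => /eqP ->.
      rewrite !apply_c1 // e2 x'1 x1 /=; case: (x c.2); rewrite ?eqxx //.
      by rewrite orbF eq_sym (negbTE ne).
    rewrite !apply_c2 // e2 x'1 x1 /=.
    by case: (x c.2); rewrite ?eqxx ?orbT.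
  rewrite (apply_unrel wf cL (p := p) (x := x') (x' := x)) //; last first.
    - by move=> t /hne.
    - by rewrite -e !inE eqxx.
  have -> // : (r == if x c.2 then c.1 else c.2) = false.
  apply/negbTE; move: hr; rewrite !inE; case: ifP => _; apply: contra => /eqP ->;
    by rewrite eqxx ?orbT.
- have ne : c.2 != c.1 by apply/eqP => h; move: (wf_lt wf cL); rewrite h ltnn.
  have e1 : x' c.1 = x c.1 by rewrite hx' -e eq_sym (negbTE ne).
  have x'2 : x' c.2 = true by rewrite e.
  have x2 : x c.2 = false by rewrite e.
  exists (if x c.1 then c.1 else c.2); split; last first.
    case: ifP => _; last by left.
    by right; exists c => //; rewrite e !eqxx orbT.
  split.
    by case: ifP => h2; [rewrite apply_c1 // x2 andbF | rewrite apply_c2 // x2 h2].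
  move=> r; case: (boolP (r \in [:: c.1; c.2])) => hr.
    rewrite !inE in hr; case/orP: hr => /eqP ->.
      rewrite !apply_c1 // e1 x'2 x2 andbF andbT.
      by case: (x c.1); rewrite ?eqxx // orbF eq_sym (negbTE ne).
    rewrite !apply_c2 // e1 x'2 x2 orbF orbT.
    by case: (x c.1); rewrite ?eqxx ?orbT.
  rewrite (apply_unrel wf cL (p := p) (x := x') (x' := x)) //; last first.
    - by move=> t /hne.
    - by rewrite -e !inE eqxx orbT.
  have -> // : (r == if x c.1 then c.1 else c.2) = false.
  apply/negbTE; move: hr; rewrite !inE; case: ifP => _; apply: contra => /eqP ->;
    by rewrite eqxx ?orbT.
- exists p; split; last by left.
  split; first by rewrite apply_free.
  move=> r; case: (eqVneq r p) => [->|rp]; first by rewrite apply_free // x'p.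
  rewrite /= (apply_agree (x := x') (x' := x)) //; last by rewrite hne.
  move=> c0 c0L _; have /andP[h1 h2] := hf c0 c0L.
  by rewrite -!hne.
Qed.

Lemma fold_step (E : rel 'I_n) Ls x x' p : (forall L, L \in Ls -> wf_layer L) ->
  (forall L c, L \in Ls -> c \in L -> E c.1 c.2 && E c.2 c.1) ->
  one_more x x' p -> exists q, one_more (fl Ls x) (fl Ls x') q /\ connect E p q.
Proof.
elim: Ls x x' p => [|L Ls IH] x x' p hw hE h; rewrite /fl /=.
  by exists p; split => //; exact: connect0.
have [q1 [h1 hr]] := layer_step (hw L (mem_head _ _)) h.
have hw' : forall L', L' \in Ls -> wf_layer L' by move=> L' hL'; apply: hw; rewrite inE hL' orbT.
have hE' : forall L' c, L' \in Ls -> c \in L' -> E c.1 c.2 && E c.2 c.1.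
  by move=> L' c hL'; apply: hE; rewrite inE hL' orbT.
have [q2 [h2 hc]] := IH _ _ _ hw' hE' h1.
exists q2; split => //; apply: connect_trans hc.
case: hr => [-> | [c cL /orP[/andP[/eqP e1 /eqP e2] | /andP[/eqP e1 /eqP e2]]]].
- exact: connect0.
- by apply: connect1; have /andP[+ _] := hE L c (mem_head _ _) cL; rewrite e1 e2.
- by apply: connect1; have /andP[_ +] := hE L c (mem_head _ _) cL; rewrite e1 e2.
Qed.

Lemma fold_mono Ls x x' : (forall r, x r -> x' r) -> forall r, fl Ls x r -> fl Ls x' r.
Proof.
elim: Ls x x' => [|L Ls IH] x x' h //=.
by apply: IH; apply: apply_mono.
Qed.

Lemma sortedP x : sorted_input x -> forall a b : 'I_n, (a <= b)%N -> x a -> x b.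
Proof.
move=> hs a b hab ha; move: hs => /forallP/(_ a)/forallP/(_ b)/implyP/(_ hab).
by rewrite ha; case: (x b).
Qed.

Lemma apply_sorted L x : wf_layer L -> sorted_input x -> apply_layer L x = x.
Proof.
move=> wf hs; apply/ffunP => r.
case: (pos_cases L r) => [[c cL <-]|[[c cL <-]|hf]].
- rewrite apply_c1 //; case h1: (x c.1) => //=.
  exact: sortedP hs _ _ (ltnW (wf_lt wf cL)) h1.
- rewrite apply_c2 //; case h1: (x c.1) => //=.
  by rewrite (sortedP hs (ltnW (wf_lt wf cL)) h1).
- exact: apply_free.
Qed.

Lemma fold_sorted Ls x : (forall L, L \in Ls -> wf_layer L) -> sorted_input x -> fl Ls x = x.
Proof.
elim: Ls x => [|L Ls IH] x hw hs //=.
rewrite /fl /= apply_sorted ?hw ?mem_head //.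
by apply: IH hs => L' hL'; apply: hw; rewrite inE hL' orbT.
Qed.

Lemma SL (o o' : input n) K q : (K <= n)%N -> (forall r, o r = (K <= r)%N) ->
  one_more o o' q -> sorted_input o' -> forall r, o' r = (K.-1 <= r)%N.
Proof.
move=> hK ho [oq ho'] hs.
have qK : (q < K)%N by rewrite ltnNge -ho oq.
have eK : K = q.+1.
  apply/eqP; rewrite eqn_leq qK andbT leqNgt; apply/negP => hlt.
  have hr : (q.+1 < n)%N by lia.
  have := sortedP hs (a := q) (b := Ordinal hr) (leqnSn _).
  rewrite !ho' eqxx /= ho /= leqNgt hlt /=.
  have -> : (Ordinal hr == q) = false by apply/negbTE; rewrite -val_eqE /= neq_ltn ltnSn orbT.
  by move=> /(_ isT).
move=> r; rewrite ho' ho eK /= (leq_eqVlt q) -val_eqE eq_sym.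
by [].
Qed.

Definition F (A : {set 'I_n}) : input n := [ffun r => r \in A].

Lemma one_more_F (A : {set 'I_n}) (p : 'I_n) : p \notin A -> one_more (F A) (F (p |: A)) p.
Proof.
move=> hp; split; first by rewrite ffunE (negbTE hp).
by move=> r; rewrite !ffunE in_setU1.
Qed.

Lemma ext_set s (A : {set 'I_n}) : (#|A| + s <= n)%N ->
  exists B : {set 'I_n}, A \subset B /\ #|B| = (#|A| + s)%N.
Proof.
elim: s => [|s IH] h; first by exists A; rewrite addn0.
have [B [AB hB]] := IH (leq_trans (leq_add (leqnn _) (leqnSn s)) h).
have : (0 < #|~: B|)%N by have := cardsC B; rewrite card_ord; lia.
case/card_gt0P => p; rewrite inE => pB.
exists (p |: B); split; first exact: subset_trans AB (subsetUr _ _).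
by rewrite cardsU1 pB hB /=; lia.
Qed.

Lemma sub_set d (A : {set 'I_n}) s : #|A| = (s + d)%N ->
  exists B : {set 'I_n}, B \subset A /\ #|B| = s.
Proof.
elim: d A => [|d IH] A h; first by exists A; rewrite h addn0.
have [p pA] : exists p, p \in A by apply/card_gt0P; rewrite h addnS.
have hc : #|A :\ p| = (s + d)%N by move: h; rewrite (cardsD1 p A) pA addnS add1n => -[].
have [B [BA hB]] := IH (A :\ p) hc.
by exists B; split => //; exact: subset_trans BA (subD1set _ _).
Qed.

Lemma set_mono k (C : network n) (A B : {set 'I_n}) : A \subset B ->
  forall r, state C k (F A) r -> state C k (F B) r.
Proof.
move=> AB; apply: (fold_mono (Ls := take k C)) => r; rewrite !ffunE.
exact: (subsetP AB).
Qed.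


End Aux.

Lemma outE n (C : network n) x : output C x = fl C x.
Proof. by rewrite /output /state take_size. Qed.

Lemma pattern n (C : network n) : wf_network C -> sorting_network C ->
  forall (A : {set 'I_n}) (r : 'I_n), output C (F A) r = (n - #|A| <= r)%N.
Proof.
move=> hw hs A; move Hs: #|A| => s; elim: s A Hs => [|s IH] A Hs r.
  have -> : A = set0 by apply/eqP; rewrite -cards_eq0 Hs.
  have hw' : forall L, L \in C -> wf_layer L by apply/allP.
  have srt : sorted_input (F (set0 : {set 'I_n})).
    by apply/forallP => a; apply/forallP => b; apply/implyP => _; rewrite !ffunE !inE.
  by rewrite outE fold_sorted // ffunE inE subn0 leqNgt ltn_ord.
have : (0 < #|A|)%N by rewrite Hs.
case/card_gt0P => p pA.
have defA : A = p |: (A :\ p) by rewrite setD1K.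
have hc : #|A :\ p| = s by move: Hs; rewrite (cardsD1 p A) pA add1n => -[].
have hw' : forall L, L \in C -> wf_layer L by apply/allP.
have pn : p \notin A :\ p by rewrite !inE eqxx.
have [q [hq _]] := fold_step (E := fun _ _ => true) hw' (fun _ _ _ _ => erefl)
  (one_more_F pn).
rewrite -defA in hq.
have hsn : (s < n)%N.
  have := max_card (mem A); rewrite card_ord Hs //.
have hIH : forall r', fl C (F (A :\ p)) r' = (n - s <= r')%N.
  by move=> r'; rewrite -outE; apply: IH.
have := SL (K := n - s) (leq_subr _ _) hIH hq _ r.
rewrite -outE subnS; apply; exact: hs.
Qed.

Lemma out_split n (C : network n) k x : (0 < k <= size C)%N ->
  output C x = fl (drop k C) (apply_layer (nth [::] C k.-1) (state C k.-1 x)).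
Proof.
move=> /andP[k0 kC]; rewrite outE /fl -{1}(cat_take_drop k C) foldl_cat.
have -> : take k C = rcons (take k.-1 C) (nth [::] C k.-1).
  by case: k k0 kC => // k' _ kC; rewrite (take_nth [::]).
by rewrite foldl_rcons.
Qed.

Lemma later_suffix n (C : network n) k L (c : comparator n) : L \in drop k C -> c \in L ->
  later_edge C k c.1 c.2 && later_edge C k c.2 c.1.
Proof.
move=> /(nthP [::]) [t ht eL] cL.
have hk : (k + t < size C)%N by rewrite size_drop ltn_subRL in ht.
rewrite nth_drop in eL.
by apply/andP; split; apply/existsP; exists (Ordinal hk); rewrite /= ltnS leq_addr /=;
  apply/existsP; exists c; rewrite eL cL !eqxx ?orbT.
Qed.

Theorem theorem2 (n : nat) (C : network n) :
  wf_network C -> sorting_network C -> no_redundant C ->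
  forall (k : nat), (1 <= k < size C)%N ->
  forall c : comparator n, c \in nth [::] C k.-1 ->
  forall m : 'I_n, (c.1 < m < c.2)%N ->
    same_block C k m c.1 \/ same_block C k m c.2.
Proof.
move=> hw hs hnr k /andP[k1 kC] c cL m /andP[im mj].
have hwC : forall L, L \in C -> wf_layer L by apply/allP.
have kk : (0 < k <= size C)%N by rewrite k1 ltnW.
have wfk : wf_layer (nth [::] C k.-1).
  by apply: hwC; apply: mem_nth; move: k1 kC; clear; case: k => // k _ /ltnW.
have Esym : symmetric (later_edge C k).
  move=> a b; rewrite /later_edge; apply: eq_existsb => k'; congr (_ && _).
  by apply: eq_existsb => c0; rewrite orbC.
have csym := sym_connect_sym Esym.
case: (boolP (same_block C k m c.1)) => [h|hi]; first by left.
case: (boolP (same_block C k m c.2)) => [h|hj]; first by right.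
exfalso.
rewrite /same_block csym in hi; rewrite /same_block csym in hj.
pose H := fun A : {set 'I_n} => state C k.-1 (F A).
have lt12 := wf_lt wfk cL.
have K1 : forall (A : {set 'I_n}) p, p \notin A -> (n - #|A| = m.+1)%N ->
    H (p |: A) c.1 = H A c.1 /\ H (p |: A) c.2 = H A c.2.
  move=> A p pA hA.
  have hwt : forall L, L \in take k.-1 C -> wf_layer L by move=> L /mem_take; apply: hwC.
  have [r [[hr0 hr] _]] := fold_step (E := fun _ _ => true) hwt (fun _ _ _ _ => erefl) (one_more_F pA).
  have hr' : forall t, H (p |: A) t = (t == r) || H A t by exact: hr.
  have hr0' : H A r = false by exact: hr0.
  have [q [[hq0 hq] _]] := layer_step wfk (conj hr0 hr).
  have hwd : forall L, L \in drop k C -> wf_layer L by move=> L /mem_drop; apply: hwC.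
  have [qo [[ho0 ho] hc]] := fold_step hwd (fun L c0 hL hc0 => later_suffix hL hc0) (conj hq0 hq).
  rewrite -!out_split // in ho0 ho.
  have qom : qo = m.
    move: ho0 (ho qo); rewrite !(pattern hw hs) cardsU1 pA eqxx /= => h0 h1.
    rewrite add1n subnS hA /= in h0 h1; move/negbT: h0; rewrite -ltnNge ltnS => h0.
    by apply/val_inj/eqP; rewrite eqn_leq h0 h1.
  rewrite qom in hc.
  have hq' : forall t, apply_layer (nth [::] C k.-1) (H (p |: A)) t =
     (t == q) || apply_layer (nth [::] C k.-1) (H A) t by exact: hq.
  have Ci : apply_layer (nth [::] C k.-1) (H A) c.1 = false ->
            apply_layer (nth [::] C k.-1) (H (p |: A)) c.1 = true -> False.
    by move=> h1; rewrite hq' h1 orbF => /eqP e; rewrite e hc in hi.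
  have Cj : apply_layer (nth [::] C k.-1) (H A) c.2 = false ->
            apply_layer (nth [::] C k.-1) (H (p |: A)) c.2 = true -> False.
    by move=> h1; rewrite hq' h1 orbF => /eqP e; rewrite e hc in hj.
  rewrite !apply_c1 // !apply_c2 // !hr' in Ci Cj.
  rewrite !hr'.
  have n12 : (c.1 == c.2) = false by apply/negbTE; rewrite -val_eqE neq_ltn lt12.
  have n21 : (c.2 == c.1) = false by rewrite eq_sym.
  case: (eqVneq c.1 r) => [e1|n1].
    rewrite -e1 in hr0' Ci Cj *; rewrite hr0' eqxx n21 /= in Ci Cj *.
    by case: (H A c.2) Ci Cj => /= Ci Cj; [case: Ci|case: Cj].
  case: (eqVneq c.2 r) => [e2|n2].
    rewrite -e2 in hr0' Ci Cj *; rewrite hr0' eqxx n12 /= in Ci Cj *.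
    by case: (H A c.1) Ci Cj => /= Ci Cj; [case: Ci|case: Cj].
  by [].
pose Y := [set t : 'I_n | (m < t)%N].
have hjn : (m.+1 < n)%N by apply: leq_ltn_trans mj (ltn_ord _).
have srtY : sorted_input (F Y).
  apply/forallP => a; apply/forallP => b; apply/implyP => hab; rewrite !ffunE !inE.
  by case h: (m < a)%N => //=; rewrite (leq_trans h hab).
have hY : (n - #|Y| = m.+1)%N.
  have hp := pattern hw hs Y.
  rewrite outE fold_sorted // in hp.
  have h1 := hp (Ordinal (ltnW hjn)); have h2 := hp (Ordinal hjn).
  rewrite !ffunE !inE /= ltnn ltnSn in h1 h2.
  move/esym/negbT: h1; rewrite -ltnNge => h1.
  apply/eqP; rewrite eqn_leq h1 andbT; by rewrite -h2.
have C3 : H Y c.1 = false /\ H Y c.2 = true.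
  have hwt : forall L, L \in take k.-1 C -> wf_layer L by move=> L /mem_take; apply: hwC.
  rewrite /H /state -/(fl _ _) fold_sorted // !ffunE !inE mj.
  by split => //; apply/negbTE; rewrite -leqNgt ltnW.
have C2 : forall d (A : {set 'I_n}), #|A :\: Y| = d -> #|A| = #|Y| ->
    H A c.1 = false /\ H A c.2 = true.
  elim=> [|d IH] A hd hAc.
    have sub : A \subset Y by rewrite -setD_eq0 -cards_eq0 hd.
    have -> // : A = Y by apply/eqP; rewrite eqEcard sub hAc leqnn.
  have [p pAY] : exists p, p \in A :\: Y by apply/card_gt0P; rewrite hd.
  have hYA : #|Y :\: A| = d.+1.
    have := cardsID Y A; have := cardsID A Y; rewrite setIC => h1 h2.
    by apply/eqP; rewrite -(eqn_add2l #|A :&: Y|) h1 -hAc -h2 hd.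
  have [q qYA] : exists q, q \in Y :\: A by apply/card_gt0P; rewrite hYA.
  move: (pAY) qYA; rewrite !inE => /andP[pY pA] /andP[qA qY].
  pose A' := (q |: A) :\ p.
  have hqA : #|q |: A| = #|A|.+1 by rewrite cardsU1 qA.
  have pW : p \in q |: A by rewrite in_setU1 pA orbT.
  have hA' : #|A'| = #|A| by move: hqA; rewrite (cardsD1 p (q |: A)) pW add1n => -[].
  have pA' : p \notin A' by rewrite !inE eqxx.
  have eW : p |: A' = q |: A by rewrite setD1K.
  have hd' : #|A' :\: Y| = d.
    have -> : A' :\: Y = (A :\: Y) :\ p.
      apply/setP => t; rewrite !inE.
      case: (eqVneq t q) => [->|_]; first by rewrite qY /= !andbF.
      by case: (m < t)%N; case: (t != p); case: (t \in A).
    by move: hd; rewrite (cardsD1 p (A :\: Y)) pAY add1n => -[].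
  have [e1 e2] := K1 A q qA (etrans (congr1 (subn n) hAc) hY).
  have [e3 e4] := K1 A' p pA' (etrans (congr1 (subn n) (etrans hA' hAc)) hY).
  rewrite eW in e3 e4.
  have [f1 f2] := IH A' hd' (etrans hA' hAc).
  by split; [rewrite -e1 e3 f1 | rewrite -e2 e4 f2].
have [x /andP[hx1 hx2]] : exists x, state C k.-1 x c.1 && ~~ state C k.-1 x c.2.
  case: (boolP [exists x, state C k.-1 x c.1 && ~~ state C k.-1 x c.2]) => [/existsP//|hno].
  exfalso; apply: (hnr k c _ cL) => [|x]; first by rewrite k1 ltnW.
  move/existsPn: hno => /(_ x).
  by case: (state C k.-1 x c.1); case: (state C k.-1 x c.2).
pose X := [set t | x t].
have FX : F X = x by apply/ffunP => t; rewrite ffunE inE.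
have hYn : (#|Y| <= n)%N by have := max_card (mem Y); rewrite card_ord.
case: (leqP #|X| #|Y|) => hX.
  have hle : (#|X| + (#|Y| - #|X|) <= n)%N by rewrite subnKC.
  have [B [XB hB]] := ext_set hle.
  rewrite subnKC // in hB.
  have := set_mono (k := k.-1) (C := C) XB (r := c.1).
  rewrite FX hx1 => /(_ isT).
  by have [-> _] := C2 _ B erefl hB.
have hle : #|X| = (#|Y| + (#|X| - #|Y|))%N by rewrite subnKC // ltnW.
have [B [BX hB]] := sub_set hle.
have := set_mono (k := k.-1) (C := C) BX (r := c.2).
have [_ ->] := C2 _ B erefl hB.
by rewrite FX (negbTE hx2) => /(_ isT).
Qed.
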